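(* (a) Let $G$ be a uniformly random ADMG on vertex set $\{1,\dots,n\}$. Then there is a constant $c>0$ such that for all sufficiently large $n$, $\mathbb{E}[|\mathrm{MEC}(G)|] \ge 2^{c n^2}$. (b) Let $H$ be a uniformly random DCG on vertex set $\{1,\dots,n\}$. Then there is a constant $c>0$ such that for all sufficiently large $n$, $\mathbb{E}[|\mathrm{MEC}(H)|] \ge 2^{c n}$.
   Context: An acyclic directed mixed graph (ADMG) on vertex set $V$ consists of a set of directed edges (ordered pairs $(v,w)$, $v\neq w$, written $v\to w$) containing no directed cycle, together with a set of bidirected edges (unordered pairs $\{v,w\}$, $v\ne w$, written $v\leftrightarrow w$). A uniformly random ADMG is uniform over all ADMGs on $V$; equivalently, a uniformly random DAG together with each bidirected edge included independently with probability $1/2$. A directed cyclic graph (DCG) on $V$ is any directed graph without self-loops (both $v\to w$ and $w\to v$ may be present; directed cycles allowed); a uniformly random DCG includes each of the $n(n-1)$ possible directed edges independently with probability $1/2$. Paths and d-separation: a path from $a$ to $b$ is a sequence $v_1,e_1,\dots,e_{k-1},v_k$ with $v_1=a\neq b=v_k$ (vertices may repeat), each $e_j$ an edge (directed in either direction, or bidirected) between $v_j$ and $v_{j+1}$. An internal vertex $v_j$ is a collider if both $e_{j-1}$ and $e_j$ have an arrowhead at $v_j$ (directed into $v_j$ or bidirected). $x$ is a descendant of $v$ if $x=v$ or there is a directed path from $v$ to $x$. A path is active given $Z\subseteq V\setminus\{a,b\}$ if every internal non-collider is not in $Z$ and every collider is in $Z$ or has a descendant in $Z$; $a,b$ are d-connected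 given $Z$ if an active path exists, else d-separated. Two graphs on the same vertex set are Markov equivalent if they have the same d-separation statements. $\mathrm{MEC}(G)$ is the set of graphs of the same model class (ADMGs in (a), DCGs in (b)) on the same vertex set that are Markov equivalent to $G$. *)

(* Defs.v *)
From HB Require Import structures.
From mathcomp Require Import all_boot all_order all_algebra.
From mathcomp Require Import boolp reals exp.
Set Implicit Arguments. Unset Strict Implicit. Unset Printing Implicit Defensive.
Import Order.TTheory GRing.Theory Num.Theory.
Local Open Scope ring_scope.

(* A mixed graph on the vertex set 'I_n (standing for {1,...,n}):
   G.1 (v,w) = true  iff the directed edge v -> w is present;
   G.2 (v,w) = true  iff the bidirected edge v <-> w is present
   (for ADMGs G.2 is required to be symmetric and irreflexive, so it
   encodes a set of unordered pairs). *)
Definition mgraph (n : nat) :=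
  ({ffun 'I_n * 'I_n -> bool} * {ffun 'I_n * 'I_n -> bool})%type.

Definition dir n (G : mgraph n) : rel 'I_n := fun v w => G.1 (v, w).
Definition bi n (G : mgraph n) : rel 'I_n := fun v w => G.2 (v, w).

Definition is_admg n (G : mgraph n) : bool :=
  [&& [forall v, ~~ dir G v v],
      [forall v, forall w, dir G v w ==> ~~ connect (dir G) w v],
      [forall v, ~~ bi G v v] &
      [forall v, forall w, bi G v w == bi G w v]].

Definition is_dcg n (G : mgraph n) : bool :=
  [forall v, ~~ dir G v v] && [forall v, forall w, ~~ bi G v w].

(* Kind of an edge traversed by a path step from x to y:
   Fwd : x -> y,  Bwd : x <- y,  Bid : x <-> y. *)
Inductive ekind := Fwd | Bwd | Bid.

Definition edge_ok n (G : mgraph n) (k : ekind) (x y : 'I_n) : bool :=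
  match k with Fwd => dir G x y | Bwd => dir G y x | Bid => bi G x y end.

(* arrowhead at the end (target) / start (source) of a traversed edge *)
Definition head_end (k : ekind) : bool :=
  match k with Fwd | Bid => true | Bwd => false end.
Definition head_start (k : ekind) : bool :=
  match k with Bwd | Bid => true | Fwd => false end.

(* A path from a is given by a and the list of steps (edge kind, next vertex);
   vertices may repeat. *)
Fixpoint valid_path n (G : mgraph n) (x : 'I_n) (s : seq (ekind * 'I_n)) : bool :=
  match s with
  | [::] => true
  | (k, y) :: s' => edge_ok G k x y && valid_path G y s'
  end.

Definition is_descendant n (G : mgraph n) (x v : 'I_n) : bool :=
  connect (dir G) v x.

Fixpoint active_internal n (G : mgraph n) (Z : {set 'I_n})
    (s : seq (ekind * 'I_n)) : bool :=
  match s with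
  | (k1, y) :: (((k2, _) :: _) as s') =>
      (if head_end k1 && head_start k2
       then (y \in Z) || [exists z in Z, is_descendant G z y]
       else y \notin Z)
      && active_internal G Z s'
  | _ => true
  end.

Definition d_connected n (G : mgraph n) (a b : 'I_n) (Z : {set 'I_n}) : Prop :=
  exists s : seq (ekind * 'I_n),
    [&& valid_path G a s, active_internal G Z s & last a (map snd s) == b].

Definition markov_equiv n (G G' : mgraph n) : Prop :=
  forall (a b : 'I_n) (Z : {set 'I_n}), a != b -> a \notin Z -> b \notin Z ->
    (d_connected G a b Z <-> d_connected G' a b Z).

Definition MEC_admg n (G : mgraph n) : {set mgraph n} :=
  [set G' | is_admg G' && `[< markov_equiv G G' >]].
Definition MEC_dcg n (G : mgraph n) : {set mgraph n} :=
  [set G' | is_dcg G' && `[< markov_equiv G G' >]].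

Definition E_MEC_admg (R : realType) (n : nat) : R :=
  (\sum_(G : mgraph n | is_admg G) (#|MEC_admg G|%:R : R))
    / (#|[set G : mgraph n | is_admg G]|%:R).
Definition E_MEC_dcg (R : realType) (n : nat) : R :=
  (\sum_(G : mgraph n | is_dcg G) (#|MEC_dcg G|%:R : R))
    / (#|[set G : mgraph n | is_dcg G]|%:R).

(* Main.v *)
Require Import Defs.
From HB Require Import structures.
From mathcomp Require Import all_boot all_order all_algebra.
From mathcomp Require Import boolp reals exp.
From mathcomp Require Import zify.
Import Order.TTheory GRing.Theory Num.Theory.
Set Implicit Arguments. Unset Strict Implicit. Unset Printing Implicit Defensive.

Section Comb.
Variable n : nat.

Definition completeb (G : mgraph n) : bool :=
  [forall a, forall b, (a != b) ==> [|| dir G a b, dir G b a | bi G a b]].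

Lemma complete_dconn G a b Z : completeb G -> a != b -> d_connected G a b Z.
Proof.
move=> /forallP/(_ a)/forallP/(_ b)/implyP H /H /or3P [h|h|h].
- by exists [:: (Fwd, b)]; rewrite /= h eqxx.
- by exists [:: (Bwd, b)]; rewrite /= h eqxx.
- by exists [:: (Bid, b)]; rewrite /= h eqxx.
Qed.

Lemma complete_equiv G G' : completeb G -> completeb G' -> markov_equiv G G'.
Proof. by move=> cG cG' a b Z ab _ _; split=> _; apply: complete_dconn. Qed.

Lemma sum_lb (P : pred (mgraph n)) (M : mgraph n -> {set mgraph n})
  (S : {set mgraph n}) :
  (forall G, G \in S -> P G) -> (forall G, G \in S -> S \subset M G) ->
  (#|S| * #|S| <= \sum_(G | P G) #|M G|)%N.
Proof.
move=> SP SM.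
rewrite (bigID (fun G => G \in S)) /=.
apply: leq_trans (leq_addr _ _).
rewrite -sum_nat_const.
rewrite [X in (_ <= X)%N](eq_bigl (mem S)); last first.
  by move=> G; apply/idP/idP => [/andP[]|h] //; apply/andP; split => //; apply: SP.
by apply: leq_sum => G GS; apply: subset_leq_card (SM G GS).
Qed.

Definition D := [pred p : 'I_n * 'I_n | (p.1 < p.2)%N].

Lemma cardD : (2 * #|D| + n = n * n)%N.
Proof.
have h1 : #|[pred p : 'I_n * 'I_n | (p.2 < p.1)%N]| = #|D|.
  rewrite -(@card_image _ _ (fun p : 'I_n * 'I_n => (p.2, p.1)) _ D); last first.
    by case=> a b [c d] /= [-> ->].
  apply: eq_card => -[a b]; rewrite !inE /=.
  apply/idP/imageP => [h|[[c d]] /= cd [-> ->] //].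
  by exists (b, a).
have h2 : #|[pred p : 'I_n * 'I_n | p.1 == p.2]| = n.
  transitivity #|'I_n|; last exact: card_ord.
  rewrite -(@card_image _ _ (fun i : 'I_n => (i, i)) _ 'I_n); last first.
    by move=> i j [].
  apply: eq_card => -[a b]; rewrite !inE /=.
  apply/idP/imageP => [/eqP ab|[c _ [-> ->]]]; last by rewrite eqxx.
  by exists a => //; rewrite ab.
have h3 : #|[predC D]| = (#|[pred p : 'I_n * 'I_n | (p.2 < p.1)%N]| +
                          #|[pred p : 'I_n * 'I_n | p.1 == p.2]|)%N.
  rewrite -(cardID [pred p : 'I_n * 'I_n | p.1 == p.2]) addnC; congr (_ + _)%N.
    apply: eq_card => -[a b]; rewrite !inE /=.
    by rewrite -leqNgt ltn_neqAle eq_sym.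
  apply: eq_card => -[a b]; rewrite !inE /=.
  by rewrite andbC; case: eqP => //= ->; rewrite ltnn.
have := cardC D; rewrite card_prod card_ord h3 h1 h2 => <-.
by rewrite mul2n -addnn addnA.
Qed.

Lemma connect_incr (e : rel 'I_n) x y :
  (forall a b, e a b -> (a < b)%N) -> connect e x y -> (x <= y)%N.
Proof.
move=> H /connectP [p]; elim: p x => [|z p IH] x /=; first by move=> _ ->.
by case/andP => /H xz /IH h /h zy; apply: leq_trans (ltnW xz) zy.
Qed.

Definition phiA (h : {ffun 'I_n * 'I_n -> 'I_3}) : mgraph n :=
  ([ffun p : 'I_n * 'I_n => (p.1 < p.2)%N && (val (h p) != 1%N)],
   [ffun p : 'I_n * 'I_n => ((p.1 < p.2)%N && (val (h p) != 0%N)) ||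
                            ((p.2 < p.1)%N && (val (h (p.2, p.1)) != 0%N))]).

Definition phiC (h : {ffun 'I_n * 'I_n -> 'I_3}) : mgraph n :=
  ([ffun p : 'I_n * 'I_n => ((p.1 < p.2)%N && (val (h p) != 1%N)) ||
                            ((p.2 < p.1)%N && (val (h (p.2, p.1)) != 0%N))],
   [ffun p : 'I_n * 'I_n => false]).

Definition P3 := pffun_on (ord0 : 'I_3) D [set: 'I_3].

Lemma cardP3 : #|P3| = (3 ^ #|D|)%N.
Proof. by rewrite card_pffun_on cardsT card_ord. Qed.

Lemma P3_out h (p : 'I_n * 'I_n) : h \in P3 -> ~~ (p.1 < p.2)%N -> h p = ord0.
Proof.
case/pffun_onP => /subsetP sub _ Dp.
by apply/eqP; apply: contraNT Dp => hp; apply: sub; rewrite inE.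
Qed.

Lemma ord3_eq (x y : 'I_3) :
  (val x != 1%N) = (val y != 1%N) -> (val x != 0%N) = (val y != 0%N) -> x = y.
Proof.
case: x y => [x hx] [y hy] /= e1 e2; apply/val_inj => /=; move: hx hy e1 e2.
by case: x => [|[|[|]]]; case: y => [|[|[|]]].
Qed.

Lemma phiA_inj : {in P3 &, injective phiA}.
Proof.
move=> h1 h2 H1 H2 [e1 e2]; apply/ffunP => -[a b].
move/ffunP: (e1) => /(_ (a, b)).
move/ffunP: (e2) => /(_ (a, b)).
rewrite !ffunE /=.
case: (boolP (a < b)%N) => ab /=.
  have ba : (b < a)%N = false by apply/negbTE; rewrite -leqNgt ltnW.
  by rewrite ba /= !orbF => f2 f1; apply: ord3_eq.
by move=> _ _; rewrite (@P3_out h1 (a, b) H1 ab) (@P3_out h2 (a, b) H2 ab).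
Qed.

Lemma phiC_inj : {in P3 &, injective phiC}.
Proof.
move=> h1 h2 H1 H2 [e1]; apply/ffunP => -[a b].
move/ffunP: (e1) => /(_ (a, b)).
move/ffunP: (e1) => /(_ (b, a)).
rewrite !ffunE /=.
case: (boolP (a < b)%N) => ab /=.
  have ba : (b < a)%N = false by apply/negbTE; rewrite -leqNgt ltnW.
  by rewrite ba /= !orbF => f2 f1; apply: ord3_eq.
by move=> _ _; rewrite (@P3_out h1 (a, b) H1 ab) (@P3_out h2 (a, b) H2 ab).
Qed.

Lemma phiA_admg h : is_admg (phiA h) && completeb (phiA h).
Proof.
have dlt : forall a b, dir (phiA h) a b -> (a < b)%N.
  by move=> a b; rewrite /dir ffunE /= => /andP[].
apply/andP; split; last first.
  apply/forallP => a; apply/forallP => b; apply/implyP => ab.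
  rewrite /dir /bi !ffunE /=.
  case: (ltngtP a b) => [lab|lba|eab] /=.
  - by case: (val (h (a, b))) => [|[|]].
  - by case: (val (h (b, a))) => [|[|]]; rewrite ?orbT.
  - by move: ab; rewrite (val_inj eab) eqxx.
apply/and4P; split.
- by apply/forallP => v; rewrite /dir ffunE /= ltnn.
- apply/forallP => v; apply/forallP => w; apply/implyP => /dlt vw.
  by apply/negP => /(connect_incr dlt); rewrite leqNgt vw.
- by apply/forallP => v; rewrite /bi ffunE /= ltnn.
- apply/forallP => v; apply/forallP => w; rewrite /bi !ffunE /=.
  by rewrite orbC.
Qed.

Lemma phiC_dcg h : is_dcg (phiC h) && completeb (phiC h).
Proof.
apply/andP; split; last first.
  apply/forallP => a; apply/forallP => b; apply/implyP => ab.
  rewrite /dir /bi !ffunE /=.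
  case: (ltngtP a b) => [lab|lba|eab] /=.
  - by case: (val (h (a, b))) => [|[|]].
  - by case: (val (h (b, a))) => [|[|]]; rewrite ?orbT.
  - by move: ab; rewrite (val_inj eab) eqxx.
apply/andP; split.
- by apply/forallP => v; rewrite /dir ffunE /= ltnn.
- by apply/forallP => v; apply/forallP => w; rewrite /bi ffunE.
Qed.

Definition psiA (G : mgraph n) : {ffun 'I_n * 'I_n -> bool * bool * bool} :=
  [ffun p : 'I_n * 'I_n => if (p.1 < p.2)%N then (G.1 p, G.1 (p.2, p.1), G.2 p)
                           else (false, false, false)].

Definition A6 := [pred t : bool * bool * bool | ~~ (t.1.1 && t.1.2)].

Lemma admg_dir_recover G (a b : 'I_n) : is_admg G ->
  G.1 (a, b) = if (a < b)%N then (psiA G (a, b)).1.1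
               else if (b < a)%N then (psiA G (b, a)).1.2 else false.
Proof.
case/and4P => /forallP d0 _ _ _; rewrite !ffunE /=.
case: (ltngtP a b) => //= eab.
by have := d0 a; rewrite /dir (val_inj eab) => /negPf.
Qed.

Lemma admg_bi_recover G (a b : 'I_n) : is_admg G ->
  G.2 (a, b) = if (a < b)%N then (psiA G (a, b)).2
               else if (b < a)%N then (psiA G (b, a)).2 else false.
Proof.
case/and4P => _ _ /forallP b0 /forallP bs; rewrite !ffunE /=.
case: (ltngtP a b) => //= eab.
  by have := bs a; move/forallP/(_ b)/eqP; rewrite /bi.
by have := b0 a; rewrite /bi (val_inj eab) => /negPf.
Qed.

Lemma psiA_inj : {in [set G : mgraph n | is_admg G] &, injective psiA}.
Proof.
move=> [G1 G2] [H1 H2]; rewrite !inE => aG aH e.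
congr pair; apply/ffunP => -[a b].
  by rewrite (admg_dir_recover a b aG) (admg_dir_recover a b aH) e.
by rewrite (admg_bi_recover a b aG) (admg_bi_recover a b aH) e.
Qed.

Lemma psiA_on G : is_admg G -> psiA G \in pffun_on (false, false, false) D A6.
Proof.
case/and4P => _ /forallP ac _ _.
apply/pffun_onP; split.
  apply/subsetP => -[a b]; rewrite !inE ffunE /=.
  by case: (a < b)%N.
move=> t /imageP[[a b]]; rewrite inE /= => ab ->.
rewrite ffunE /= ab inE /=; apply/negP => /andP[d1 d2].
have := ac a; move/forallP/(_ b)/implyP/(_ d1); rewrite connect1 //.
Qed.

Lemma card_admg : (#|[set G : mgraph n | is_admg G]| <= 6 ^ #|D|)%N.
Proof.
rewrite -(card_in_imset psiA_inj).
have -> : (6 ^ #|D| = #|pffun_on (false, false, false) D A6|)%N.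
  have c6 : #|A6| = 6%N.
    have := cardC A6; rewrite !card_prod !card_bool.
    have -> : #|[predC A6]| = #|[set (true, true, false); (true, true, true)]|.
      by apply: eq_card => -[[[] []] []]; rewrite !inE.
    by rewrite cards2 /= => h; apply/eqP; rewrite -(eqn_add2r 2) h.
  by rewrite card_pffun_on c6.
apply: subset_leq_card; apply/subsetP => x /imsetP[G]; rewrite inE => aG ->.
exact: psiA_on.
Qed.

Definition psiC (G : mgraph n) : {ffun 'I_n * 'I_n -> bool * bool} :=
  [ffun p : 'I_n * 'I_n => if (p.1 < p.2)%N then (G.1 p, G.1 (p.2, p.1))
                           else (false, false)].

Lemma psiC_inj : {in [set G : mgraph n | is_dcg G] &, injective psiC}.
Proof.
move=> [G1 G2] [H1 H2]; rewrite !inE => /andP[/forallP d1 /forallP b1]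
  /andP[/forallP d2 /forallP b2] e.
congr pair; apply/ffunP => -[a b].
  move/ffunP: (e) => /(_ (a, b)); move/ffunP: (e) => /(_ (b, a)).
  rewrite !ffunE /=.
  case: (ltngtP a b) => [lab|lba|eab] /=.
  - by move=> _ [].
  - by move=> [].
  - move: (d1 a) (d2 a); rewrite /dir /= (val_inj eab) => /negPf -> /negPf -> //.
have := b1 a; move/forallP/(_ b)/negPf; rewrite /bi /= => ->.
by have := b2 a; move/forallP/(_ b)/negPf; rewrite /bi /= => ->.
Qed.

Lemma card_dcg : (#|[set G : mgraph n | is_dcg G]| <= 4 ^ #|D|)%N.
Proof.
rewrite -(card_in_imset psiC_inj).
have -> : (4 ^ #|D| = #|pffun_on (false, false) D [set: bool * bool]|)%N.
  by rewrite card_pffun_on cardsT card_prod card_bool.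
apply: subset_leq_card; apply/subsetP => x /imsetP[G]; rewrite inE => aG ->.
apply/pffun_onP; split; last by move=> y _; rewrite inE.
apply/subsetP => -[a b]; rewrite !inE ffunE /=.
by case: (a < b)%N.
Qed.

Lemma S_admg_lb :
  (3 ^ #|D| <= #|[set G : mgraph n | is_admg G && completeb G]|)%N.
Proof.
rewrite -cardP3 -(card_in_imset phiA_inj).
apply: subset_leq_card; apply/subsetP => x /imsetP[h _ ->].
by rewrite inE phiA_admg.
Qed.

Lemma S_dcg_lb :
  (3 ^ #|D| <= #|[set G : mgraph n | is_dcg G && completeb G]|)%N.
Proof.
rewrite -cardP3 -(card_in_imset phiC_inj).
apply: subset_leq_card; apply/subsetP => x /imsetP[h _ ->].
by rewrite inE phiC_dcg.
Qed.

End Comb.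

Lemma sum_admg n (S : {set mgraph n}) :
  S = [set G : mgraph n | is_admg G && completeb G] ->
  (#|S| * #|S| <= \sum_(G : mgraph n | is_admg G) #|MEC_admg G|)%N.
Proof.
move=> ->; apply: sum_lb => [G|G GS]; first by rewrite inE => /andP[].
apply/subsetP => G' G'S; rewrite inE; move: GS G'S; rewrite !inE.
case/andP => _ cG /andP[-> cG'] /=; apply/asboolP; exact: complete_equiv.
Qed.

Lemma sum_dcg n (S : {set mgraph n}) :
  S = [set G : mgraph n | is_dcg G && completeb G] ->
  (#|S| * #|S| <= \sum_(G : mgraph n | is_dcg G) #|MEC_dcg G|)%N.
Proof.
move=> ->; apply: sum_lb => [G|G GS]; first by rewrite inE => /andP[].
apply/subsetP => G' G'S; rewrite inE; move: GS G'S; rewrite !inE.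
case/andP => _ cG /andP[-> cG'] /=; apply/asboolP; exact: complete_equiv.
Qed.

Lemma expn_mono x y e : (x <= y)%N -> (x ^ e <= y ^ e)%N.
Proof. by move=> h; elim: e => // e IH; rewrite !expnS leq_mul. Qed.

Lemma pow_bound b k d : (2 * b * b <= 81)%N -> (b <= 9)%N -> (2 * k <= d)%N ->
  (2 ^ k * b ^ d <= 9 ^ d)%N.
Proof.
move=> hb hb9 hkd; rewrite -(subnKC hkd) !expnD expn0 !muln1 !mulnA -!expnMn.
by apply: leq_mul; apply: expn_mono.
Qed.

Local Open Scope ring_scope.

Lemma real_bound (R : realType) (sumN t k : nat) : (0 < t)%N ->
  (2 ^ k * t <= sumN)%N -> (2:R) ^+ k <= sumN%:R / t%:R.
Proof.
by move=> t0 h; rewrite ler_pdivlMr ?ltr0n // -natrX -natrM ler_nat.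
Qed.

From mathcomp Require Import lra.

Lemma nat_ineq n d : (3 <= n)%N -> (2 * d + n = n * n)%N -> (n * n <= 16 * (d %/ 2))%N.
Proof. move=> h1 h2. nia. Qed.

Theorem theorem2 (R : realType) :
  (exists c : R, 0 < c /\ exists N : nat, forall n : nat, (N <= n)%N ->
     (2 : R) `^ (c * (n%:R ^+ 2)) <= E_MEC_admg R n) /\
  (exists c : R, 0 < c /\ exists N : nat, forall n : nat, (N <= n)%N ->
     (2 : R) `^ (c * n%:R) <= E_MEC_dcg R n).
Proof.
split; exists (1/16); (split; first lra); exists 3%N => n n3;
  have hD := cardD n; set d := #|D n| in hD *;
  have hk := nat_ineq n3 hD; set k := (d %/ 2)%N in hk *;
  have hkd : (2 * k <= d)%N by rewrite /k mulnC leq_trunc_div.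
- apply: (@le_trans _ _ (2 `^ k%:R)).
    apply: ler_powR; first lra.
    have : (n * n)%:R <= (16 * k)%:R :> R by rewrite ler_nat.
    rewrite !natrM expr2; lra.
  rewrite powR_mulrn //.
  rewrite /E_MEC_admg -natr_sum.
  set S := [set G : mgraph n | is_admg G && completeb G].
  have hs := S_admg_lb n; rewrite -/S in hs.
  have ht := card_admg n.
  have hST : (#|S| <= #|[set G : mgraph n | is_admg G]|)%N.
    by apply: subset_leq_card; apply/subsetP => G; rewrite !inE => /andP[].
  apply: real_bound.
    by apply: leq_trans hST; apply: leq_trans hs; rewrite expn_gt0.
  apply: leq_trans (sum_admg (erefl S)).
  apply: (@leq_trans (2 ^ k * 6 ^ d)); first by rewrite leq_mul2l ht orbT.
  apply: (@leq_trans (9 ^ d)); first exact: pow_bound.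
  by rewrite (_ : 9 = 3 * 3)%N // expnMn leq_mul.
- apply: (@le_trans _ _ (2 `^ k%:R)).
    apply: ler_powR; first lra.
    have : (n * n)%:R <= (16 * k)%:R :> R by rewrite ler_nat.
    have : n%:R <= (n * n)%:R :> R by rewrite ler_nat leq_pmulr // (leq_trans _ n3).
    rewrite !natrM; lra.
  rewrite powR_mulrn //.
  rewrite /E_MEC_dcg -natr_sum.
  set S := [set G : mgraph n | is_dcg G && completeb G].
  have hs := S_dcg_lb n; rewrite -/S in hs.
  have ht := card_dcg n.
  have hST : (#|S| <= #|[set G : mgraph n | is_dcg G]|)%N.
    by apply: subset_leq_card; apply/subsetP => G; rewrite !inE => /andP[].
  apply: real_bound.
    by apply: leq_trans hST; apply: leq_trans hs; rewrite expn_gt0.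
  apply: leq_trans (sum_dcg (erefl S)).
  apply: (@leq_trans (2 ^ k * 4 ^ d)); first by rewrite leq_mul2l ht orbT.
  apply: (@leq_trans (9 ^ d)); first exact: pow_bound.
  by rewrite (_ : 9 = 3 * 3)%N // expnMn leq_mul.
Qed.
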